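(* Let $(X,\mathcal U)$ be a non-archimedean metrizable non-discrete uniform space. Then $A_{NA}(X,\mathcal U)$ is not complete.
   Context: A uniform space is non-archimedean if its (Hausdorff) uniformity has a base of equivalence relations; it is discrete if the diagonal is an entourage. $A_{NA}(X,\mathcal U)$ is the free abelian non-archimedean group of $(X,\mathcal U)$: an abelian Hausdorff topological group with a local base at $0$ of open subgroups, together with a uniformly continuous map $i\colon X\to A_{NA}$ such that every uniformly continuous map from $X$ into an abelian non-archimedean group factors uniquely as a continuous homomorphism composed with $i$. Complete means complete with respect to the group's uniformity. *)

(* Defs.v *)
From HB Require Import structures.
From mathcomp Require Import all_boot all_order all_algebra.
From mathcomp Require Import all_classical all_reals all_analysis.
Set Implicit Arguments. Unset Strict Implicit. Unset Printing Implicit Defensive.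
Import Order.TTheory GRing.Theory Num.Theory.
Local Open Scope classical_set_scope.
Local Open Scope ring_scope.

Definition equiv_rel_set {T : Type} (E : set (T * T)) : Prop :=
  [/\ forall x, E (x, x),
      forall x y, E (x, y) -> E (y, x) &
      forall x y z, E (x, y) -> E (y, z) -> E (x, z)].

Definition nonarch_uniform (X : uniformType) : Prop :=
  forall E : set (X * X), entourage E ->
    exists2 F : set (X * X), entourage F /\ equiv_rel_set F & F `<=` E.

Definition discrete_uniform (X : uniformType) : Prop :=
  entourage (@diagonal X).

Definition metrizable_uniform (X : uniformType) : Prop :=
  hausdorff_space X /\ countable_uniformity X.

Definition is_subgroup (G : zmodType) (V : set G) : Prop :=
  V 0 /\ forall x y, V x -> V y -> V (x - y).

Definition nonarch_group (G : topologicalZmodType) : Prop :=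
  hausdorff_space G /\
  forall U : set G, nbhs (0 : G) U ->
    exists2 V : set G, open V /\ is_subgroup V & V `<=` U.

(** Uniform continuity of a map from a uniform space into an abelian
    topological group equipped with its group uniformity
    { (a, b) | b - a \in U }, U a neighbourhood of 0. *)
Definition unif_cont_to_group (X : uniformType) (G : topologicalZmodType)
    (f : X -> G) : Prop :=
  forall U : set G, nbhs (0 : G) U ->
    exists2 E : set (X * X), entourage E &
      forall x y, E (x, y) -> U (f y - f x).

Definition group_cauchy (G : topologicalZmodType) (F : set_system G) : Prop :=
  forall U : set G, nbhs (0 : G) U ->
    exists2 A : set G, F A & forall x y, A x -> A y -> U (y - x).

Definition group_complete (G : topologicalZmodType) : Prop :=
  forall F : set_system G, ProperFilter F -> group_cauchy F ->
    exists g : G, F --> g.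

Definition is_free_NA_group (X : uniformType) (G : topologicalZmodType)
    (i : X -> G) : Prop :=
  [/\ nonarch_group G,
      unif_cont_to_group i &
      forall (H : topologicalZmodType) (f : X -> H),
        nonarch_group H -> unif_cont_to_group f ->
        exists! g : G -> H,
          [/\ continuous g, (forall a b, g (a + b) = g a + g b) &
              forall x, g (i x) = f x]].

(* Main.v *)
From HB Require Import structures.
From mathcomp Require Import all_boot all_order all_algebra.
From mathcomp Require Import all_classical all_reals all_analysis.
From mathcomp Require Import ring zify.
Require Import Defs.
Set Implicit Arguments. Unset Strict Implicit. Unset Printing Implicit Defensive.
Import Order.TTheory GRing.Theory Num.Theory.
Local Open Scope classical_set_scope.
Local Open Scope ring_scope.

Definition dv (k : nat) (m : int) : Prop := (4%:Z ^+ k %| m)%Z.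

Lemma dv0 k : dv k 0. Proof. exact: dvdz0. Qed.
Lemma dvB k x y : dv k x -> dv k y -> dv k (x - y).
Proof. by move=> hx hy; rewrite /dv rpredB. Qed.
Lemma dvD k x y : dv k x -> dv k y -> dv k (x + y).
Proof. by move=> hx hy; rewrite /dv rpredD. Qed.
Lemma dvN k x : dv k x -> dv k (- x).
Proof. by move=> hx; rewrite /dv rpredN. Qed.
Lemma dv_le k l x : (k <= l)%N -> dv l x -> dv k x.
Proof. by move=> kl; apply: dvdz_trans; apply: dvdz_exp2l. Qed.
Lemma dv_pow k l : (k <= l)%N -> dv k (4%:Z ^+ l).
Proof. by move=> kl; apply: dvdz_exp2l. Qed.
Lemma dv_all x : (forall k, dv k x) -> x = 0.
Proof.
move=> h; apply/eqP; apply: contraT => nz.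
have := h `|x|%N; rewrite /dv dvdzE => /dvdn_leq.
rewrite absz_gt0 nz => /(_ isT).
rewrite abszX /=.
have H1 : (`|x| < 4 ^ `|x|)%N.
  apply: (@leq_trans (2 ^ `|x|)); first exact: ltn_expl.
  by rewrite leq_exp2r // absz_gt0.
by move=> H2; have := leq_trans H1 H2; rewrite ltnn.
Qed.

Definition Z4 : Type := int.
HB.instance Definition _ := GRing.Zmodule.on Z4.

Definition nbhs4 (p : Z4) (A : set Z4) : Prop :=
  exists k : nat, forall y : Z4, dv k (y - p) -> A y.

HB.instance Definition _ := hasNbhs.Build Z4 nbhs4.

Lemma nbhs4_filter (p : Z4) : ProperFilter (nbhs4 p).
Proof.
apply: Build_ProperFilter_ex.
  by move=> A [k hk]; exists p; apply: hk; rewrite subrr; exact: dv0.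
split.
- by exists 0%N.
- move=> A B [k hA] [l hB]; exists (maxn k l) => y hy; split.
    by apply: hA; apply: dv_le hy; exact: leq_maxl.
  by apply: hB; apply: dv_le hy; exact: leq_maxr.
- by move=> A B sAB [k hA]; exists k => y /hA /sAB.
Qed.

Lemma nbhs4_singleton (p : Z4) (A : set Z4) : nbhs4 p A -> A p.
Proof. by move=> [k hk]; apply: hk; rewrite subrr; exact: dv0. Qed.

Lemma nbhs4_nbhs (p : Z4) (A : set Z4) : nbhs4 p A -> nbhs4 p (nbhs4^~ A).
Proof.
move=> [k hk]; exists k => y hy; exists k => z hz; apply: hk.
have -> : z - p = (z - y) - (p - y) by rewrite opprB addrA subrK.
by apply: dvB => //; rewrite -opprB; apply: dvN.
Qed.

HB.instance Definition _ := Nbhs_isNbhsTopological.Build Z4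
  nbhs4_filter nbhs4_singleton nbhs4_nbhs.

Lemma subsub4 (V : zmodType) (y z p q : V) : y - z - (p - q) = y - p - (z - q).
Proof. by rewrite opprB !opprD !opprK -!addrA; congr (_ + _); rewrite [RHS]addrCA (addrC q). Qed.

Lemma Z4_sub_cont : continuous (fun x : Z4 * Z4 => x.1 - x.2).
Proof.
move=> [p q] A /= [k hk].
exists ([set y : Z4 | dv k (y - p)], [set y : Z4 | dv k (y - q)]).
  by split; exists k.
move=> [y z] [/= hy hz]; apply: hk.
have -> : y - z - (p - q) = (y - p) - (z - q).
  exact: subsub4.
exact: dvB.
Qed.

HB.instance Definition _ :=
  PreTopologicalNmodule_isTopologicalZmodule.Build Z4 Z4_sub_cont.


Lemma subsub2 (V : zmodType) (y p q : V) : y - q - (y - p) = p - q.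
Proof. by rewrite opprB addrC addrA subrK. Qed.

Lemma subsub3 (V : zmodType) (x y z : V) : x - y = (x - z) - (y - z).
Proof. by rewrite opprB addrA subrK. Qed.

Lemma Z4_hausdorff : hausdorff_space Z4.
Proof.
move=> p q cl; apply/eqP; rewrite -subr_eq0; apply/eqP; apply: dv_all => k.
have [y [hy1 hy2]] := cl [set y : Z4 | dv k (y - p)] [set y : Z4 | dv k (y - q)]
  (ex_intro _ k (fun _ h => h)) (ex_intro _ k (fun _ h => h)).
have := dvB hy2 hy1.
by rewrite subsub2.
Qed.

Lemma Z4_nonarch : nonarch_group Z4.
Proof.
split; first exact: Z4_hausdorff.
move=> U [k hk]; exists [set y : Z4 | dv k y].
  split.
    rewrite openE => y hy; exists k => z hz /=.
    by have := dvD hz hy; rewrite subrK.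
  by split; [exact: dv0 | move=> x y; exact: dvB].
by move=> y hy; apply: hk; rewrite subr0.
Qed.

Fixpoint tsum (n : nat) : int := if n is m.+1 then tsum m + 4%:Z ^+ m else 0.

Lemma tsumE n : 3 * tsum n + 1 = 4%:Z ^+ n.
Proof.
elim: n => [|n IH] /=; first by rewrite mulr0 add0r expr0.
by rewrite exprS -IH; ring.
Qed.

Lemma tsum_ncvg (L : Z4) : ~ ((tsum : nat -> Z4) @ \oo --> L).
Proof.
move=> hc.
suff : 3 * (L : int) + 1 = 0 by lia.
apply: dv_all => k.
have : nbhs L [set y : Z4 | dv k (y - L)] by exists k.
move=> /hc [N0 _ hN0].
have := hN0 (maxn N0 k) (leq_maxl _ _) => /= h.
have -> : 3 * (L : int) + 1 = (3 * tsum (maxn N0 k) + 1) - 3 * (tsum (maxn N0 k) - L).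
  by ring.
rewrite tsumE; apply: dvB; first by apply: dv_pow; exact: leq_maxr.
by apply: dvdz_mull.
Qed.

Section Main.
Variables (X : uniformType) (G : topologicalZmodType) (i : X -> G).
Variables (U : nat -> set (X * X)) (a b : nat -> X).
Hypotheses (Uent : forall n, entourage (U n)) (Ueq : forall n, equiv_rel_set (U n))
  (Udec : forall n, U n.+1 `<=` U n)
  (Ubase : forall E, entourage E -> exists n, U n `<=` E)
  (Uab : forall n, U n (a n, b n))
  (Ddisj : forall m m' x, U m.+1 (b m, x) -> U m'.+1 (b m', x) -> m = m')
  (Da : forall j m, ~ U m.+1 (b m, a j)).

Lemma Umono m n : (m <= n)%N -> U n `<=` U m.
Proof.
move=> /subnK <-; elim: (n - m)%N => [//|d IH] /=.
by rewrite addSn => p hp; apply: IH; apply: Udec.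
Qed.

Let D m x := U m.+1 (b m, x).

Definition fZ (x : X) : Z4 :=
  match pselect (exists m, D m x) with
  | left h => 4%:Z ^+ (projT1 (cid h))
  | right _ => 0
  end.

Lemma fD m x : D m x -> fZ x = 4%:Z ^+ m.
Proof.
move=> h; rewrite /fZ; case: pselect => [h'|]; last by case; exists m.
by case: cid => m' /= hm'; rewrite (Ddisj hm' h).
Qed.

Lemma f0 x : ~ (exists m, D m x) -> fZ x = 0.
Proof. by move=> h; rewrite /fZ; case: pselect. Qed.

Lemma fcase x k : (exists2 m, (m < k)%N & D m x) \/ dv k (fZ x).
Proof.
have [[m hm]|hn] := pselect (exists m, D m x); last by right; rewrite f0 //; exact: dv0.
have [mk|km] := ltnP m k; first by left; exists m.
by right; rewrite (fD hm); exact: dv_pow.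
Qed.

Lemma Dtrans k m x y : (m < k)%N -> U k (x, y) -> D m x -> D m y.
Proof.
move=> mk hxy hx; have [_ _ tr] := Ueq m.+1.
by apply: tr hx _; apply: (Umono mk).
Qed.

Lemma Dsym k m x y : (m < k)%N -> U k (x, y) -> D m y -> D m x.
Proof.
move=> mk hxy; apply: Dtrans mk _; have [_ sy _] := Ueq k; exact: sy.
Qed.

Lemma fZ_uc : unif_cont_to_group fZ.
Proof.
move=> W [k hk]; exists (U k) => // x y hxy; apply: hk; rewrite subr0.
have [[m mk hm]|hx] := fcase x k.
  by rewrite (fD hm) (fD (Dtrans mk hxy hm)) subrr; exact: dv0.
have [[m mk hm]|hy] := fcase y k.
  by rewrite (fD hm) (fD (Dsym mk hxy hm)) subrr; exact: dv0.
exact: dvB.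
Qed.

Lemma fZb n : fZ (b n) = 4%:Z ^+ n.
Proof. by apply: fD; have [r _ _] := Ueq n.+1; exact: r. Qed.

Lemma fZa n : fZ (a n) = 0.
Proof. by apply: f0 => -[m hm]; exact: (Da hm). Qed.

Fixpoint sG (n : nat) : G := if n is m.+1 then sG m + (i (b m) - i (a m)) else 0.

Lemma subgroupD (V : set G) : is_subgroup V -> forall x y, V x -> V y -> V (x + y).
Proof.
move=> [h0 hB] x y hx hy.
have -> : x + y = x - (0 - y) by rewrite sub0r opprK.
by apply: (hB) => //; apply: (hB).
Qed.

Lemma sG_cauchy (hna : nonarch_group G) (huc : unif_cont_to_group i) :
  group_cauchy (sG @ \oo).
Proof.
move=> W hW.
have [V [Vop Vsg] VW] := hna.2 W hW.
have V0 : V 0 by case: Vsg.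
have [E hE hEV] := huc V (open_nbhs_nbhs (conj Vop V0)).
have [n0 hn0] := Ubase hE.
have key d : V (sG (n0 + d) - sG n0).
  elim: d => [|d IH]; first by rewrite addn0 subrr.
  rewrite addnS /= addrAC; apply: subgroupD => //; apply: hEV; apply: hn0.
  by apply: (Umono (leq_addr d n0)).
exists [set y | exists2 N, (n0 <= N)%N & y = sG N].
  by exists n0 => // N hN; exists N.
move=> x y [M hM ->] [N hN ->]; apply: VW.
rewrite -(subnKC hM) -(subnKC hN).
have -> : sG (n0 + (N - n0)) - sG (n0 + (M - n0)) =
  (sG (n0 + (N - n0)) - sG n0) - (sG (n0 + (M - n0)) - sG n0).
  by rewrite [LHS](subsub3 _ _ (sG n0)).
by apply: Vsg.2.
Qed.

Lemma main_abstract : is_free_NA_group i -> ~ group_complete G.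
Proof.
move=> [hna huc univ] hcomp.
have [g [[gc gadd gi] _]] := univ Z4 fZ Z4_nonarch fZ_uc.
have g0 : g 0 = 0.
  have h := gadd 0 0; rewrite addr0 in h.
  by apply: (@addrI _ (g 0)); rewrite addr0 -h.
have gN x : g (- x) = - g x.
  apply: (@addrI _ (g x)); rewrite -gadd !subrr; exact: g0.
have gs n : g (sG n) = tsum n.
  elim: n => [|n IH] /=; first exact: g0.
  by rewrite gadd gadd gN !gi IH fZb fZa subr0.
have [L hL] := hcomp _ _ (sG_cauchy hna huc).
have := continuous_cvg _ (gc L) hL.
rewrite (@eq_cvg _ _ _ _ (tsum : nat -> Z4)) => [|n /=]; last exact: gs.
move=> h; apply: (@tsum_ncvg (g L)); apply: h.
Qed.

End Main.

Lemma build_seq (S A : Type) (P : nat -> S -> A -> S -> Prop) (s0 : S) :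
  (forall n s, exists p, P n s p.1 p.2) ->
  exists (u : nat -> S) (v : nat -> A), u 0%N = s0 /\ forall n, P n (u n) (v n) (u n.+1).
Proof.
move=> h.
have [F hF] := @choice _ _ (fun ns : nat * S => fun p : A * S => P ns.1 ns.2 p.1 p.2)
  (fun ns => h ns.1 ns.2).
pose u := fix u (n : nat) : S := if n is m.+1 then (F (m, u m)).2 else s0.
exists u, (fun n => (F (n, u n)).1); split => // n.
exact: (hF (n, u n)).
Qed.

Definition eqent (X : uniformType) (V : set (X * X)) := entourage V /\ equiv_rel_set V.

Lemma Umono' (X : Type) (U : nat -> set (X * X)) (Udec : forall n, U n.+1 `<=` U n) m n :
  (m <= n)%N -> U n `<=` U m.
Proof.
move=> /subnK <-; elim: (n - m)%N => [//|d IH] /=.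
by rewrite addSn => p hp; apply: IH; apply: Udec.
Qed.

Section Final.
Variables (X : uniformType) (G : topologicalZmodType) (i : X -> G).
Variable e : nat -> set (X * X).
Hypotheses (ebase : forall A, entourage A -> exists N, e N `<=` A)
  (eent : forall n, entourage (e n))
  (sep : forall x y : X, x <> y -> exists2 E, entourage E & ~ E (x, y))
  (eqsub : forall E : set (X * X), entourage E ->
     exists F, [/\ entourage F, equiv_rel_set F & F `<=` E])
  (hfree : is_free_NA_group i).

Lemma case1 (c : X) : (forall E, entourage E -> exists y, y <> c /\ E (c, y)) ->
  ~ group_complete G.
Proof.
move=> hc.
have [V0 [V0e V0q _]] := eqsub entourageT.
pose P n (V : set (X * X)) (ab : X * X) (V' : set (X * X)) :=
  eqent V -> [/\ eqent V', V' `<=` V, V' `<=` e n,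
               V (c, ab.2) & ab.1 = c /\ ~ V' (c, ab.2)].
have [U [ab [U0 hU]]] : exists (u : nat -> set (X * X)) (v : nat -> X * X),
    u 0%N = V0 /\ forall n, P n (u n) (v n) (u n.+1).
  apply: build_seq => n V.
  have [hV|hV] := pselect (eqent V); last by exists ((c, c), V).
  have [y [yc Vy]] := hc V hV.1.
  have [S hS nS] := sep (nesym yc).
  have [F [Fe Fq FS]] := eqsub (filterI (filterI hV.1 (eent n)) hS).
  exists ((c, y), F) => _ /=; split => //.
  - by move=> p /FS [[]].
  - by move=> p /FS [[]].
  - by split => // /FS [].
have Uq : forall n, eqent (U n).
  by elim => [|n IH]; [rewrite U0; split | have [] := hU n IH].
have Udec : forall n, U n.+1 `<=` U n by move=> n; have [] := hU n (Uq n).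
have Ue : forall n, U n.+1 `<=` e n by move=> n; have [] := hU n (Uq n).
have Uab : forall n, U n (c, (ab n).2) by move=> n; have [] := hU n (Uq n).
have Ua : forall n, (ab n).1 = c by move=> n; have [_ _ _ _ []] := hU n (Uq n).
have Un : forall n, ~ U n.+1 (c, (ab n).2) by move=> n; have [_ _ _ _ []] := hU n (Uq n).
have Ueq n := (Uq n).2.
have hsym n x y : U n (x, y) -> U n (y, x) by have [_ s _] := Ueq n; exact: s.
have htr n x y z : U n (x, y) -> U n (y, z) -> U n (x, z)
  by have [_ _ t] := Ueq n; exact: t.
have Um := Umono' Udec.
have key m m' x : (m < m')%N -> U m.+1 ((ab m).2, x) -> U m'.+1 ((ab m').2, x) -> False.
  move=> mm' h1 h2; apply: (Un m).
  have h3 : U m' (c, x) by apply: htr (Uab m') (Udec _ _ h2).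
  apply: (htr _ _ x); last exact: hsym.
  exact: (Um _ _ mm').
apply: (@main_abstract X G i U (fun n => (ab n).1) (fun n => (ab n).2)) => //.
- by move=> n; exact: (Uq n).1.
- by move=> E /ebase [m hm]; exists m.+1 => p /Ue /hm.
- by move=> n /=; rewrite Ua; exact: Uab.
- move=> m m' x /= h1 h2; case: (ltngtP m m') => // [mm'|mm'].
    by case: (key _ _ _ mm' h1 h2).
  by case: (key _ _ _ mm' h2 h1).
- by move=> j m /= /hsym; rewrite Ua; exact: Un.
Qed.

Lemma case2 : (forall c : X, exists2 E : set (X * X), entourage E & forall y, E (c, y) -> y = c) ->
  (forall E : set (X * X), entourage E -> exists x y, x <> y /\ E (x, y)) ->
  ~ group_complete G.
Proof.
move=> hiso hnd.
have [V0 [V0e V0q _]] := eqsub (@entourageT X).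
have [x0 _] := hnd _ (@entourageT X).
pose P n (V : set (X * X)) (ab : X * X) (V' : set (X * X)) :=
  eqent V -> [/\ eqent V', V' `<=` V, V' `<=` e n, V ab &
    [/\ ab.1 <> ab.2, (forall z, V' (ab.1, z) -> z = ab.1) &
        (forall z, V' (ab.2, z) -> z = ab.2)]].
have [U [ab [U0 hU]]] : exists (u : nat -> set (X * X)) (v : nat -> X * X),
    u 0%N = V0 /\ forall n, P n (u n) (v n) (u n.+1).
  apply: build_seq => n V.
  have [hV|hV] := pselect (eqent V); last by exists ((x0, x0), V).
  have [x [y [xy Vxy]]] := hnd V hV.1.
  have [Sx hSx iSx] := hiso x.
  have [Sy hSy iSy] := hiso y.
  have [F [Fe Fq FS]] := eqsub (filterI (filterI (filterI hV.1 (eent n)) hSx) hSy).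
  exists ((x, y), F) => _ /=; split => //.
  - by move=> p /FS [[[]]].
  - by move=> p /FS [[[]]].
  - split => //; first by move=> z /FS [[[_ _] /iSx]].
    by move=> z /FS [_ /iSy].
have Uq : forall n, eqent (U n).
  by elim => [|n IH]; [rewrite U0; split | have [] := hU n IH].
have Udec : forall n, U n.+1 `<=` U n by move=> n; have [] := hU n (Uq n).
have Ue : forall n, U n.+1 `<=` e n by move=> n; have [] := hU n (Uq n).
have Uab : forall n, U n (ab n) by move=> n; have [] := hU n (Uq n).
have Uab' : forall n, U n ((ab n).1, (ab n).2) by move=> n; case: (ab n) (Uab n).
have abn : forall n, (ab n).1 <> (ab n).2 by move=> n; have [_ _ _ _ []] := hU n (Uq n).
have isa : forall n z, U n.+1 ((ab n).1, z) -> z = (ab n).1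
  by move=> n; have [_ _ _ _ []] := hU n (Uq n).
have isb : forall n z, U n.+1 ((ab n).2, z) -> z = (ab n).2
  by move=> n; have [_ _ _ _ []] := hU n (Uq n).
have Ueq n := (Uq n).2.
have hsym n x y : U n (x, y) -> U n (y, x) by have [_ s _] := Ueq n; exact: s.
have Um := Umono' Udec.
have key m m' x : (m < m')%N -> U m.+1 ((ab m).2, x) -> U m'.+1 ((ab m').2, x) -> False.
  move=> mm' /isb h1 /isb h2.
  have := Um _ _ mm' _ (Uab' m'); rewrite -h2 h1 => /hsym /isb h3.
  by apply: (abn m'); rewrite h3 -h1 h2.
apply: (@main_abstract X G i U (fun n => (ab n).1) (fun n => (ab n).2)) => //.
- by move=> n; exact: (Uq n).1.
- by move=> E /ebase [m hm]; exists m.+1 => p /Ue /hm.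
- move=> m m' x /= h1 h2; case: (ltngtP m m') => // [mm'|mm'].
    by case: (key _ _ _ mm' h1 h2).
  by case: (key _ _ _ mm' h2 h1).
- move=> j m /= /isb h; case: (ltngtP j m) => [jm|mj|jm].
  + have := Um _ _ jm _ (Uab' m); rewrite -h => /hsym /isa h2.
    by apply: (abn m); rewrite h2 h.
  + have := Um _ _ mj _ (Uab' j); rewrite h => /isb h2.
    by apply: (abn j); rewrite h h2.
  + by apply: (abn m); rewrite -h jm.
Qed.

End Final.

Unset Implicit Arguments.

Theorem theorem4p21 (X : uniformType) (G : topologicalZmodType) (i : X -> G) :
  nonarch_uniform X -> metrizable_uniform X -> ~ discrete_uniform X ->
  is_free_NA_group i -> ~ group_complete G.
Proof.
move=> hna [hs hcu] hnd hfree.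
have [e ebase eent] := (countable_uniformityP).1 hcu.
have sep : forall x y : X, x <> y -> exists2 E : set (X * X), entourage E & ~ E (x, y).
  move=> x y nxy; apply: contrapT => hn; apply: nxy; apply: (close_eq hs).
  by rewrite entourage_close => E hE; apply: contrapT => nE; apply: hn; exists E.
have eqsub : forall E : set (X * X), entourage E ->
     exists F, [/\ entourage F, equiv_rel_set F & F `<=` E].
  by move=> E0 /hna [F [Fe Fq] FE]; exists F.
have [[c hc]|hnc] := pselect (exists c : X, forall E : set (X * X),
    entourage E -> exists y, y <> c /\ E (c, y)).
  exact: (@case1 X G i e ebase eent sep eqsub hfree c hc).
apply: (@case2 X G i e ebase eent eqsub hfree).
- move=> c; apply: contrapT => hn; apply: hnc; exists c => E hE; apply: contrapT => hE'.
  by apply: hn; exists E => // y Ey; apply: contrapT => yc; apply: hE'; exists y; split.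
- move=> E hE; apply: contrapT => hn; apply: hnd; apply: filterS hE => -[x y] Exy /=.
  by apply: contrapT => nxy; apply: hn; exists x, y.
Qed.
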